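(* Let $p=a/b$ with $a,b$ positive coprime integers, $0<p<1/2$, and $b\not\equiv 0\pmod 4$; set $k'=b$ if $b$ is even and $k'=2b$ if $b$ is odd (so $k'p=a$ for $b$ even and $k'p=2a$ for $b$ odd). Let $(\Delta_L^{(m)})_{m\ge 1}$ satisfy $\Delta_L^{(m+1)}=\Delta_L^{(m)}+1+2p-2\lceil\Delta_L^{(m)}\rceil$ for all $m\ge1$, with initial value $-1<\Delta_L^{(1)}<1$. Then $$|\Delta_L^{(m)}|<k'p+2\quad\text{for all } m\ge 1 .$$
   Context: $\lceil\cdot\rceil$ denotes the ceiling function. *)

(* Defs.v *)
From Stdlib Require Import Reals ZArith Lra.
Open Scope R_scope.

(* Ceiling function: Rceil x is the least integer z with x <= z.
   Stdlib's [up x] is the unique integer z with x < z <= x + 1,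
   so ceil x = 1 - up (-x). *)
Definition Rceil (x : R) : Z := (1 - up (- x))%Z.

Lemma Rceil_spec (x : R) : IZR (Rceil x) - 1 < x <= IZR (Rceil x).
Proof.
  unfold Rceil. destruct (archimed (- x)) as [H1 H2].
  rewrite minus_IZR. split; lra.
Qed.

(* Main.v *)
Require Import Defs.
From Stdlib Require Import Reals ZArith Lra Lia.
Open Scope R_scope.

Definition Fl (x : R) : Z := (- Rceil (- x))%Z.

Lemma Fl_spec x : IZR (Fl x) <= x < IZR (Fl x) + 1.
Proof. unfold Fl. destruct (Rceil_spec (-x)) as [H1 H2]. rewrite opp_IZR. lra. Qed.

Lemma IZR_lt_plus1 (z1 z2 : Z) : IZR z1 < IZR z2 + 1 -> (z1 <= z2)%Z.
Proof.
  intro H. assert (H' : IZR z1 < IZR (z2 + 1)) by (rewrite plus_IZR; exact H).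
  apply lt_IZR in H'. lia.
Qed.

Lemma int_unique (z1 z2 : Z) (x : R) :
  IZR z1 <= x < IZR z1 + 1 -> IZR z2 <= x < IZR z2 + 1 -> z1 = z2.
Proof.
  intros [A B] [C D].
  assert (z1 <= z2)%Z by (apply IZR_lt_plus1; lra).
  assert (z2 <= z1)%Z by (apply IZR_lt_plus1; lra). lia.
Qed.

Lemma Fl_unique z x : IZR z <= x < IZR z + 1 -> Fl x = z.
Proof. intro H. apply (int_unique _ _ x). apply Fl_spec. exact H. Qed.

Lemma Rabs_sub_tri x y : Rabs x <= Rabs (x - y) + Rabs y.
Proof. replace x with ((x - y) + y) at 1 by ring. apply Rabs_triang. Qed.

Lemma my_le_ind (Q : nat -> Prop) (n0 : nat) : Q n0 ->
  (forall n, (n0 <= n)%nat -> Q n -> Q (S n)) -> forall n, (n0 <= n)%nat -> Q n.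
Proof. intros H0 HS n Hn. induction Hn; auto. Qed.

Lemma core (q : R) (P s : nat) (K : Z) (c F : nat -> Z) (f1 : R) :
  0 < q -> P = (2*s+1)%nat -> INR P * q = IZR K ->
  (forall j, (1<=j)%nat -> IZR (F j) <= f1 - (INR j - 1)*q < IZR (F j) + 1) ->
  (forall m, (1<=m)%nat -> IZR (c (S m)) = 1 - IZR (c m) + (IZR (F m) - IZR (F (S m)))) ->
  0 <= IZR (c 1%nat) <= 1 ->
  forall n, (1<=n)%nat -> - IZR K <= IZR (c n) <= IZR K + 1.
Proof.
  intros Hq HP HK HF Hc Hc1.
  set (e := fun m : nat => (-1)^m * (2*IZR (c m) - 1)).
  set (io := fun m : nat => IZR (F m) - IZR (F (S m))).
  assert (Hio : forall m, (1<=m)%nat -> 0 <= io m).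
  { intros m Hm. destruct (HF m Hm) as [A B]. destruct (HF (S m) ltac:(lia)) as [C D].
    rewrite S_INR in C, D.
    assert (F (S m) <= F m)%Z by (apply IZR_lt_plus1; lra).
    apply IZR_le in H. unfold io. lra. }
  assert (He : forall m, (1<=m)%nat -> e (S m) = e m + 2 * (-1)^(S m) * io m).
  { intros m Hm. unfold e, io. rewrite (Hc m Hm). simpl pow. ring. }
  assert (Hw : forall u k, (1<=u)%nat -> Rabs (e (u+k)%nat - e u) <= 2*(IZR (F u) - IZR (F (u+k)%nat))).
  { intros u k Hu. induction k.
    - rewrite Nat.add_0_r. unfold Rminus. rewrite Rplus_opp_r, Rabs_R0. lra.
    - rewrite Nat.add_succ_r. rewrite He by lia.
      assert (Habs : Rabs (2 * (-1)^(S (u+k)) * io (u+k)%nat) = 2 * io (u+k)%nat).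
      { rewrite !Rabs_mult, pow_1_abs, (Rabs_pos_eq 2) by lra.
        rewrite (Rabs_pos_eq (io _)) by (apply Hio; lia). ring. }
      pose proof (Rabs_triang (e (u+k)%nat - e u) (2 * (-1)^(S(u+k)) * io (u+k)%nat)) as T.
      replace (e (u + k)%nat + 2 * (-1) ^ S (u + k) * io (u + k)%nat - e u)
        with (e (u + k)%nat - e u + 2 * (-1) ^ S (u + k) * io (u + k)%nat) by ring.
      unfold io in *. lra. }
  assert (Hwb : forall u k, (1<=u)%nat -> (k <= P)%nat -> IZR (F u) - IZR (F (u+k)%nat) <= IZR K).
  { intros u k Hu Hk. destruct (HF u Hu) as [A B]. destruct (HF (u+k)%nat ltac:(lia)) as [C D].
    rewrite plus_INR in C, D. apply le_INR in Hk.
    assert (INR k * q <= INR P * q) by (apply Rmult_le_compat_r; lra).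
    assert (Eq : (INR u + INR k - 1) * q = (INR u - 1) * q + INR k * q) by ring.
    rewrite Eq in D.
    assert (F u <= F (u+k)%nat + K)%Z. { apply IZR_lt_plus1. rewrite plus_IZR. lra. }
    apply IZR_le in H0. rewrite plus_IZR in H0. lra. }
  assert (HFP : forall j, (1<=j)%nat -> F (j+P)%nat = (F j - K)%Z).
  { intros j Hj. apply (int_unique _ _ (f1 - (INR (j+P) - 1)*q)). apply HF; lia.
    rewrite minus_IZR. rewrite plus_INR. destruct (HF j Hj). lra. }
  assert (Hs : forall n, (-1)^(n+P) = - (-1)^n).
  { intros n. rewrite pow_add, HP, pow_add, pow_mult.
    replace ((-1)^2) with 1 by ring. rewrite pow1. ring. }
  assert (Hsum : forall n, (1<=n)%nat -> e (n+P)%nat + e n = e (1+P)%nat + e 1%nat).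
  { apply my_le_ind. reflexivity. intros n Hn IH.
    replace (S n + P)%nat with (S (n+P)) by lia.
    rewrite (He (n+P)%nat) by lia. rewrite (He n) by lia.
    replace (S (n+P)) with (S n + P)%nat by lia. rewrite Hs.
    assert (io (n+P)%nat = io n).
    { unfold io. rewrite HFP by lia. replace (S (n+P)) with (S n + P)%nat by lia.
      rewrite HFP by lia. rewrite !minus_IZR. ring. }
    rewrite H. lra. }
  assert (He1 : Rabs (e 1%nat) <= 1).
  { unfold e. simpl pow. unfold Rabs. destruct Rcase_abs; lra. }
  assert (Hmain : forall n, (1<=n)%nat -> Rabs (e n) <= 2*IZR K + 1).
  { intro n. induction n as [n IH] using (well_founded_induction lt_wf). intros Hn.
    destruct (le_lt_dec n (S P)) as [H1|H1].
    - pose proof (Hw 1%nat (n-1)%nat ltac:(lia)) as W.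
      pose proof (Hwb 1%nat (n-1)%nat ltac:(lia) ltac:(lia)) as W2.
      replace (1 + (n-1))%nat with n in W, W2 by lia.
      pose proof (Rabs_sub_tri (e n) (e 1%nat)). lra.
    - destruct (le_lt_dec n (S (P + P))) as [H2|H2].
      + pose proof (Hsum (n-P)%nat ltac:(lia)) as S1.
        replace (n - P + P)%nat with n in S1 by lia.
        pose proof (Hw (n-P)%nat (1+P-(n-P))%nat ltac:(lia)) as W.
        pose proof (Hwb (n-P)%nat (1+P-(n-P))%nat ltac:(lia) ltac:(lia)) as W2.
        replace (n - P + (1 + P - (n - P)))%nat with (1+P)%nat in W, W2 by lia.
        replace (e n) with (e 1%nat + (e (1+P)%nat - e (n-P)%nat)) by lra.
        pose proof (Rabs_triang (e 1%nat) (e (1+P)%nat - e (n-P)%nat)). lra.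
      + pose proof (Hsum (n-P-P)%nat ltac:(lia)) as S1.
        pose proof (Hsum (n-P-P+P)%nat ltac:(lia)) as S2.
        replace (n - P - P + P + P)%nat with n in S2 by lia.
        replace (e n) with (e (n-P-P)%nat) by lra.
        apply IH; lia. }
  intros n Hn. pose proof (Hmain n Hn) as M. unfold e in M.
  rewrite Rabs_mult, pow_1_abs in M. revert M. unfold Rabs. destruct Rcase_abs; intros; lra.
Qed.

Theorem lemma4 (a b : Z) (Delta : nat -> R) :
  (0 < a)%Z -> (0 < b)%Z -> Z.gcd a b = 1%Z ->
  0 < IZR a / IZR b < 1 / 2 ->
  (b mod 4 <> 0)%Z ->
  (forall m : nat, (1 <= m)%nat ->
     Delta (S m) = Delta m + 1 + 2 * (IZR a / IZR b) - 2 * IZR (Rceil (Delta m))) ->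
  -1 < Delta 1%nat < 1 ->
  let k' : Z := if Z.even b then b else (2 * b)%Z in
  forall m : nat, (1 <= m)%nat ->
    Rabs (Delta m) < IZR k' * (IZR a / IZR b) + 2.
Proof.
  intros Ha Hb Hg Hp Hb4 Hrec HD1 k' m Hm.
  set (p := IZR a / IZR b) in *.
  set (q := 2 * p).
  assert (Hbr : IZR b <> 0) by (apply not_0_IZR; lia).
  assert (HPK : exists s K, INR (2*s+1) * q = IZR K /\ IZR k' * p = IZR K).
  { unfold k'. destruct (Z.even b) eqn:E.
    - apply Z.even_spec in E. destruct E as [w Hw].
      destruct (Z.even w) eqn:E2.
      + apply Z.even_spec in E2. destruct E2 as [v Hv]. exfalso. apply Hb4. rewrite Hw, Hv. replace (2*(2*v))%Z with (v*4)%Z by ring. apply Z_mod_mult.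
      + assert (E3 : Z.odd w = true) by (rewrite <- Z.negb_even, E2; reflexivity).
        apply Z.odd_spec in E3. destruct E3 as [v Hv].
        exists (Z.to_nat v), a. split.
        * rewrite plus_INR, mult_INR, (INR_IZR_INZ (Z.to_nat v)), Z2Nat.id by lia.
          unfold q, p. rewrite Hw, Hv, mult_IZR, plus_IZR, mult_IZR. simpl INR.
          field. rewrite Hw, Hv, mult_IZR, plus_IZR, mult_IZR in Hbr. lra.
        * unfold p. field. exact Hbr.
    - assert (E3 : Z.odd b = true) by (rewrite <- Z.negb_even, E; reflexivity).
      apply Z.odd_spec in E3. destruct E3 as [v Hv].
      exists (Z.to_nat v), (2*a)%Z. split.
      * rewrite plus_INR, mult_INR, (INR_IZR_INZ (Z.to_nat v)), Z2Nat.id by lia.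
        unfold q, p. rewrite Hv, mult_IZR, plus_IZR, mult_IZR. simpl INR.
        field. rewrite Hv, plus_IZR, mult_IZR in Hbr. lra.
      * unfold p. rewrite !mult_IZR. field. exact Hbr. }
  destruct HPK as [s [K [HK1 HK2]]].
  rewrite HK2.
  set (c := fun m : nat => Rceil (Delta m)).
  set (f1 := IZR (c 1%nat) - Delta 1%nat).
  set (F := fun j : nat => Fl (f1 - (INR j - 1) * q)).
  assert (HFd : forall j, F j = Fl (f1 - (INR j - 1) * q)) by reflexivity.
  assert (Hcs : forall j, IZR (c j) - 1 < Delta j <= IZR (c j)) by (intro j; apply Rceil_spec).
  assert (Hinv : forall m, (1<=m)%nat -> IZR (c m) - Delta m = f1 - (INR m - 1)*q - IZR (F m)).
  { apply my_le_ind.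
    - assert (F 1%nat = 0%Z).
      { rewrite HFd. apply Fl_unique. simpl INR. pose proof (Hcs 1%nat). unfold f1. lra. }
      rewrite H. unfold f1. simpl INR. ring.
    - intros m' Hm' IH.
      pose proof (Hcs (S m')) as Hf. pose proof (Hrec m' Hm') as R.
      assert (HFS : F (S m') = (F m' - (c (S m') + c m' - 1))%Z).
      { rewrite HFd. apply Fl_unique. rewrite S_INR.
        replace ((INR m' + 1 - 1) * q) with ((INR m' - 1) * q + q) by ring.
        rewrite minus_IZR, !minus_IZR, plus_IZR.
        assert (Hqd : q = 2 * p) by reflexivity.
        unfold c in *. lra. }
      rewrite HFS, S_INR, !minus_IZR, plus_IZR.
      replace ((INR m' + 1 - 1) * q) with ((INR m' - 1) * q + q) by ring.
      assert (Hqd : q = 2 * p) by reflexivity.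
      unfold c in *. lra. }
  assert (Hc : forall m, (1<=m)%nat -> IZR (c (S m)) = 1 - IZR (c m) + (IZR (F m) - IZR (F (S m)))).
  { intros m' Hm'. pose proof (Hinv m' Hm') as I1. pose proof (Hinv (S m') ltac:(lia)) as I2.
    pose proof (Hrec m' Hm') as R. rewrite S_INR in I2.
    replace ((INR m' + 1 - 1) * q) with ((INR m' - 1) * q + q) in I2 by ring.
    assert (Hqd : q = 2 * p) by reflexivity.
    unfold c in *. lra. }
  assert (Hq : 0 < q) by (unfold q; lra).
  assert (Hc1 : 0 <= IZR (c 1%nat) <= 1).
  { pose proof (Hcs 1%nat).
    assert (0 <= c 1%nat)%Z. { apply IZR_lt_plus1. lra. }
    assert (c 1%nat <= 1)%Z. { apply IZR_lt_plus1. lra. }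
    split; [apply IZR_le in H0 | apply IZR_le in H1]; lra. }
  assert (HF : forall j, (1<=j)%nat -> IZR (F j) <= f1 - (INR j - 1)*q < IZR (F j) + 1).
  { intros j _. rewrite HFd. apply Fl_spec. }
  pose proof (core q (2*s+1) s K c F f1 Hq eq_refl HK1 HF Hc Hc1 m Hm) as B.
  pose proof (Hcs m).
  unfold Rabs. destruct Rcase_abs; unfold c in *; lra.
Qed.
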